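(* Let $C$ be a coalgebra over a field $\Bbbk$ and $C^*$ its dual (convolution) algebra. Every left annihilator in $C^*$, i.e. every set of the form $I=\{f\in C^*\mid f\cdot h=0\ \forall h\in H\}$ for some subset $H\subseteq C^*$, is closed in the finite topology of $C^*$.
   Context: For a coalgebra $C$, $C^*$ is an algebra with convolution product $(f\cdot h)(c)=\sum f(c_1)h(c_2)$ (Sweedler notation). For a subspace $X\subseteq C$ let $X^\perp=\{f\in C^*\mid f(X)=0\}$, and for $Y\subseteq C^*$ let $Y^\perp=\{c\in C\mid f(c)=0\ \forall f\in Y\}$. The finite topology on $C^*$ is the topology whose closed subspaces are those $W\subseteq C^*$ with $W=W^{\perp\perp}$, equivalently those of the form $X^\perp$ for a subspace $X\subseteq C$. *)

(* Defs.v *)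
From HB Require Import structures.
From mathcomp Require Import all_boot all_order all_algebra.
Set Implicit Arguments. Unset Strict Implicit. Unset Printing Implicit Defensive.
Import GRing.Theory.
Local Open Scope ring_scope.

Section Coalg.
Variables (k : fieldType) (C : lmodType k).

Definition lin_functional (f : C -> k) : Prop :=
  forall (a : k) (x y : C), f (a *: x + y) = a * f x + f y.

(* A representative of Delta(c) in C (x) C, as a finite sum of pure tensors
   c = \sum c_(1) (x) c_(2) (Sweedler notation). *)
Definition sweedler := C -> seq (C * C).

Definition pair2 (delta : sweedler) (f g : C -> k) (c : C) : k :=
  \sum_(p <- delta c) f p.1 * g p.2.

Record coalgebra := Coalgebra {
  delta : sweedler;
  eps : C -> k;
  eps_lin : lin_functional eps;
  (* Delta is linear (well defined as a map C -> C (x) C); since functionals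
     f (x) g separate points of C (x) C over a field, this is tested on them *)
  delta_lin : forall f g, lin_functional f -> lin_functional g ->
     lin_functional (pair2 delta f g);
  (* coassociativity (Delta (x) id) Delta = (id (x) Delta) Delta, tested on
     f (x) g (x) h, which separate points of C (x) C (x) C *)
  coassoc : forall f g h, lin_functional f -> lin_functional g ->
     lin_functional h -> forall c,
     \sum_(p <- delta c) pair2 delta f g p.1 * h p.2 =
     \sum_(p <- delta c) f p.1 * pair2 delta g h p.2;
  counitl : forall c, \sum_(p <- delta c) eps p.1 *: p.2 = c;
  counitr : forall c, \sum_(p <- delta c) eps p.2 *: p.1 = c
}.

Definition conv (D : coalgebra) (f h : C -> k) : C -> k :=
  pair2 (delta D) f h.

Definition perpD (X : C -> Prop) : (C -> k) -> Prop :=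
  fun f => lin_functional f /\ forall c, X c -> f c = 0.

Definition perpC (Y : (C -> k) -> Prop) : C -> Prop :=
  fun c => forall f, Y f -> f c = 0.

(* W subset of C^* is closed in the finite topology iff W = W^perp perp *)
Definition finite_closed (W : (C -> k) -> Prop) : Prop :=
  forall f, W f <-> perpD (perpC W) f.

Definition left_ann (D : coalgebra) (H : (C -> k) -> Prop) : (C -> k) -> Prop :=
  fun f => lin_functional f /\ forall h, H h -> forall c, conv D f h c = 0.

End Coalg.

(* Main.v *)
Require Import Defs.
From mathcomp Require Import all_boot all_order all_algebra.
Import GRing.Theory.
Local Open Scope ring_scope.

Lemma lin0 (k : fieldType) (C : lmodType k) (f : C -> k) :
  lin_functional f -> f 0 = 0.
Proof.
move=> Hf; have := Hf 1 0 0; rewrite scaler0 addr0 mul1r => E.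
by apply: (@addrI _ (f 0)); rewrite -E addr0.
Qed.

Lemma lin_sum (k : fieldType) (C : lmodType k) (f : C -> k) {T : Type}
  (s : seq T) (a : T -> k) (v : T -> C) :
  lin_functional f -> f (\sum_(p <- s) a p *: v p) = \sum_(p <- s) a p * f (v p).
Proof.
move=> Hf; elim: s => [|x s IH]; first by rewrite !big_nil lin0.
by rewrite !big_cons Hf IH.
Qed.

Theorem proposition3p1 (k : fieldType) (C : lmodType k) (D : coalgebra C)
  (H : (C -> k) -> Prop) (HH : forall h, H h -> lin_functional h) :
  finite_closed (left_ann D H).
Proof.
move=> f; split.
  move=> Wf; split; first by case: Wf.
  by move=> c Pc; apply: Pc.
case=> Lf Pf; split => // h Hh c.
have -> : conv D f h c = f (\sum_(p <- delta D c) h p.2 *: p.1).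
  by rewrite (@lin_sum _ _ f _ _ _ _ Lf) /conv /pair2; apply: eq_bigr => p _; rewrite mulrC.
apply: Pf => g [Lg Wg].
rewrite (@lin_sum _ _ g _ _ _ _ Lg) -[RHS](Wg h Hh c) /conv /pair2.
by apply: eq_bigr => p _; rewrite mulrC.
Qed.
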